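(* Let $\alpha\ge 9$ be a number of the form $N^2$ or $N(N+1)$ with $N$ a positive integer. If $m(t_\alpha)+t_\alpha=\alpha$, then $g(t_\alpha)>m(t_\alpha)$ and $h_\alpha\le t_\alpha-1$.
   Context: A polyomino is a finite union of closed unit squares (tiles) of the square lattice, any two meeting (if at all) in a whole edge, whose interior is connected; its holes are the bounded components of its complement. For $h\ge1$, $g(h)$ is the minimum number of tiles of a polyomino with $h$ holes. Let $M(n,h)=\frac{2n+2-2\lceil 2\sqrt{n+h}\,\rceil}{4}$, $m(h)=\min\{n\ge1: M(n,h)\ge h\}$, and $t_\alpha=\max\{h\ge1: m(h)+h\le\alpha\}$ (nonempty since $m(1)=7$). For $\alpha=N^2$ (resp. $N(N+1)$), $h_\alpha$ is the maximum number of holes of a polyomino contained in the $N\times N$ square (resp. $N\times(N+1)$ rectangle). *)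

(* Defs.v *)
(* cells of the square lattice are pairs of integers (Z*Z);
   the cell (x,y) stands for the closed unit square [x,x+1] x [y,y+1]. *)
From Stdlib Require Import ZArith Reals List Relations ClassicalEpsilon.
Import ListNotations.

Definition cell := (Z * Z)%type.

Definition adj (a b : cell) : Prop :=
  (Z.abs (fst a - fst b) + Z.abs (snd a - snd b) = 1)%Z.

(* A polyomino: a nonempty finite set of tiles (duplicate-free list) whose
   interior is connected, i.e. the tiles are connected through shared edges. *)
Definition polyomino (P : list cell) : Prop :=
  P <> [] /\ NoDup P /\
  forall a b, In a P -> In b P ->
    clos_refl_trans cell (fun x y => In x P /\ In y P /\ adj x y) a b.

Definition tiles (P : list cell) : nat := length P.

Definition cconn (P : list cell) : relation cell :=
  clos_refl_trans cell (fun x y => ~ In x P /\ ~ In y P /\ adj x y).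

Definition in_hole (P : list cell) (c : cell) : Prop :=
  ~ In c P /\
  exists R : Z, forall d, cconn P c d -> (Z.abs (fst d) <= R /\ Z.abs (snd d) <= R)%Z.

(* P has exactly h holes (bounded components of the complement):
   there is a list of h representatives, one in each bounded component. *)
Definition has_holes (P : list cell) (h : nat) : Prop :=
  exists reps : list cell,
    length reps = h /\ NoDup reps /\
    (forall r, In r reps -> in_hole P r) /\
    (forall r1 r2, In r1 reps -> In r2 reps -> cconn P r1 r2 -> r1 = r2) /\
    (forall c, in_hole P c -> exists r, In r reps /\ cconn P r c).

Definition in_rect (a b : nat) (P : list cell) : Prop :=
  forall c, In c P ->
    (0 <= fst c < Z.of_nat a)%Z /\ (0 <= snd c < Z.of_nat b)%Z.

(* ceiling of a real number (Stdlib's up x is floor x + 1) *)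
Definition ceilR (x : R) : Z := (1 - up (- x))%Z.

Definition M (n h : nat) : R :=
  ((2 * INR n + 2 - 2 * IZR (ceilR (2 * sqrt (INR (n + h))))) / 4)%R.

Definition m (h : nat) : nat :=
  epsilon (inhabits 0%nat) (fun k =>
    (1 <= k)%nat /\ (M k h >= INR h)%R /\
    forall n, (1 <= n)%nat -> (M n h >= INR h)%R -> (k <= n)%nat).

Definition t (alpha : nat) : nat :=
  epsilon (inhabits 0%nat) (fun s =>
    (1 <= s)%nat /\ (m s + s <= alpha)%nat /\
    forall h, (1 <= h)%nat -> (m h + h <= alpha)%nat -> (h <= s)%nat).

(* Main.v *)
Require Import Defs.
From Stdlib Require Import ZArith Reals List Relations ClassicalEpsilon.
From Stdlib Require Import Lia Lra Permutation FinFun Classical.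
Import ListNotations.

Definition ceq_dec : forall a b : cell, {a = b} + {a <> b}.
Proof. intros [x y] [x' y']. destruct (Z.eq_dec x x'), (Z.eq_dec y y');
  [left; congruence| right; congruence ..]. Defined.

Definition memb (c : cell) (l : list cell) : bool := if In_dec ceq_dec c l then true else false.
Definition indb (b : bool) : nat := if b then 1 else 0.
Definition ceqb (u v : cell) : bool := (Z.eqb (fst u) (fst v) && Z.eqb (snd u) (snd v))%bool.

Lemma ceqb_true u v : ceqb u v = true <-> u = v.
Proof. destruct u as [a b], v as [c d]; unfold ceqb; simpl.
  rewrite Bool.andb_true_iff, !Z.eqb_eq. split; [intros [-> ->]; auto | intros H; inversion H; auto]. Qed.

Lemma ceqb_refl u : ceqb u u = true.
Proof. apply ceqb_true; auto. Qed.

Lemma memb_true c l : memb c l = true <-> In c l.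
Proof. unfold memb; destruct (In_dec ceq_dec c l); split; intros; auto; discriminate || contradiction. Qed.

Lemma memb_false c l : memb c l = false <-> ~ In c l.
Proof. unfold memb; destruct (In_dec ceq_dec c l); split; intros; auto; try discriminate; contradiction. Qed.

Fixpoint sumn (f : cell -> nat) (l : list cell) : nat :=
  match l with [] => 0%nat | x :: l' => (f x + sumn f l')%nat end.

Lemma sumn_app f l1 l2 : sumn f (l1 ++ l2) = (sumn f l1 + sumn f l2)%nat.
Proof. induction l1; simpl; lia. Qed.

Lemma sumn_plus f g l : sumn (fun x => f x + g x)%nat l = (sumn f l + sumn g l)%nat.
Proof. induction l; simpl; lia. Qed.

Lemma sumn_le f g l : (forall x, In x l -> f x <= g x)%nat -> (sumn f l <= sumn g l)%nat.
Proof. induction l; simpl; intros H; auto. specialize (IHl (fun x Hx => H x (or_intror Hx))).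
  pose proof (H a (or_introl eq_refl)). lia. Qed.

Lemma sumn_ext f g l : (forall x, In x l -> f x = g x) -> sumn f l = sumn g l.
Proof. induction l; simpl; intros H; auto. Qed.

Lemma sumn_perm f l l' : Permutation l l' -> sumn f l = sumn f l'.
Proof. induction 1; simpl; lia. Qed.

Lemma sumn_ge f l a : In a l -> (f a <= sumn f l)%nat.
Proof. induction l; simpl; intros H; [contradiction|]. destruct H as [->|H]; [lia|]. specialize (IHl H); lia. Qed.

Lemma sumn_ge2 f l a b : NoDup l -> In a l -> In b l -> a <> b -> (f a + f b <= sumn f l)%nat.
Proof. induction l as [|x l IH]; simpl; intros Hn Ha Hb Hab; [contradiction|].
  inversion Hn; subst.
  destruct Ha as [->|Ha]; destruct Hb as [->|Hb].
  - congruence.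
  - pose proof (sumn_ge f l b Hb); lia.
  - pose proof (sumn_ge f l a Ha); lia.
  - specialize (IH H2 Ha Hb Hab); lia. Qed.

Lemma filter_sum (g : cell -> bool) l : length (filter g l) = sumn (fun x => indb (g x)) l.
Proof. induction l; simpl; auto. destruct (g a); simpl; lia. Qed.

Lemma sumn_single l c : NoDup l -> sumn (fun q => indb (ceqb q c)) l = indb (memb c l).
Proof. induction l as [|x l IH]; simpl; intros Hn; auto.
  inversion Hn; subst. rewrite IH; auto. unfold memb.
  destruct (ceqb x c) eqn:E.
  - apply ceqb_true in E; subst.
    destruct (In_dec ceq_dec c (c :: l)) as [_|F]; [|exfalso; apply F; left; auto].
    destruct (In_dec ceq_dec c l); [contradiction|]. simpl; auto.
  - assert (x <> c) by (intro; subst; rewrite ceqb_refl in E; discriminate).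
    destruct (In_dec ceq_dec c (x :: l)) as [[?|?]|?]; destruct (In_dec ceq_dec c l); simpl; try tauto; try congruence.
    exfalso; apply n; right; auto. Qed.

Definition adjb (a b : cell) : bool := Z.eqb (Z.abs (fst a - fst b) + Z.abs (snd a - snd b)) 1.
Lemma adjb_true a b : adjb a b = true <-> adj a b.
Proof. unfold adjb, adj; rewrite Z.eqb_eq; tauto. Qed.
Lemma adj_sym a b : adj a b -> adj b a.
Proof. unfold adj; lia. Qed.
Lemma adjb_sym a b : adjb a b = adjb b a.
Proof. unfold adjb. f_equal. lia. Qed.

Definition sh (c : cell) (j : Z) (d : cell) : cell := (fst c + j * fst d, snd c + j * snd d)%Z.
Definition dirs : list cell := [(1,0);(-1,0);(0,1);(0,-1)]%Z.
Definition negd (d : cell) : cell := (- fst d, - snd d)%Z.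
Definition key (d c : cell) : Z := if Z.eqb (fst d) 0 then fst c else snd c.
Definition posd (d c : cell) : Z := (fst c * fst d + snd c * snd d)%Z.

Ltac dcase H := simpl in H; destruct H as [<-|[<-|[<-|[<-|[]]]]].

Lemma negd_dirs d : In d dirs -> In (negd d) dirs.
Proof. intros H; dcase H; simpl; auto. Qed.
Lemma sh0 c d : sh c 0 d = c.
Proof. destruct c; unfold sh; simpl; f_equal; lia. Qed.
Lemma sh_sh c a b d : sh (sh c a d) b d = sh c (a + b) d.
Proof. destruct c; unfold sh; simpl; f_equal; lia. Qed.
Lemma sh_neg c a d : sh c a (negd d) = sh c (- a) d.
Proof. destruct c; unfold sh, negd; simpl; f_equal; lia. Qed.
Lemma key_sh d c j : In d dirs -> key d (sh c j d) = key d c.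
Proof. intros H; dcase H; destruct c; unfold key, sh; simpl; lia. Qed.
Lemma pos_sh d c j : In d dirs -> posd d (sh c j d) = (posd d c + j)%Z.
Proof. intros H; dcase H; destruct c; unfold posd, sh; simpl; lia. Qed.
Lemma keypos_eq d u v : In d dirs -> key d u = key d v -> posd d u = posd d v -> u = v.
Proof. intros H; dcase H; destruct u, v; unfold key, posd; simpl; intros; f_equal; lia. Qed.
Lemma adj_sh d c j : In d dirs -> adj (sh c j d) (sh c (j+1) d).
Proof. intros H; dcase H; destruct c; unfold adj, sh; simpl; lia. Qed.

Lemma rt_sym_gen (Rl : relation cell) : (forall x y, Rl x y -> Rl y x) ->
  forall a b, clos_refl_trans cell Rl a b -> clos_refl_trans cell Rl b a.
Proof. intros Hs a b H; induction H; [apply rt_step; auto | apply rt_refl | eapply rt_trans; eauto]. Qed.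

Lemma cconn_sym P a b : cconn P a b -> cconn P b a.
Proof. apply rt_sym_gen. intros x y (?&?&?); repeat split; auto; apply adj_sym; auto. Qed.

Lemma cconn_trans P a b c : cconn P a b -> cconn P b c -> cconn P a c.
Proof. intros; eapply rt_trans; eauto. Qed.

Lemma chain P c e L : In e dirs ->
  (forall i : nat, (i <= L)%nat -> ~ In (sh c (Z.of_nat i) e) P) ->
  cconn P c (sh c (Z.of_nat L) e).
Proof. intros He; induction L; intros H.
  - simpl; rewrite sh0; apply rt_refl.
  - eapply rt_trans; [apply IHL; intros; apply H; lia|].
    apply rt_step. rewrite Nat2Z.inj_succ, <- Z.add_1_r. repeat split.
    + apply H; lia.
    + specialize (H (S L) (le_n _)); rewrite Nat2Z.inj_succ, <- Z.add_1_r in H; auto.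
    + apply adj_sh; auto. Qed.

Lemma ray P c e r : In e dirs ->
  (forall j : nat, ~ In (sh c (Z.of_nat j) e) P) ->
  in_hole P r -> cconn P r c -> False.
Proof. intros He Hray [Hr [Rb HB]] Hrc.
  assert (HR0 : (0 <= Rb)%Z) by (destruct (HB r (rt_refl _ _ _)); lia).
  set (L := (Z.to_nat (Rb + Z.abs (fst c) + Z.abs (snd c)) + 1)%nat).
  assert (Hc : cconn P r (sh c (Z.of_nat L) e)).
  { eapply rt_trans; [exact Hrc|]. apply chain; auto. }
  destruct (HB _ Hc) as [H1 H2]. unfold sh in H1, H2; simpl in H1, H2.
  unfold L in H1, H2.
  dcase He; simpl in H1, H2; lia. Qed.

Lemma least (Q : nat -> Prop) : (exists n, Q n) -> exists n, Q n /\ forall k, Q k -> (n <= k)%nat.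
Proof. intros [n Hn]. revert Hn. induction n as [n IH] using (well_founded_induction Nat.lt_wf_0).
  intros Hn. destruct (classic (exists k, (k < n)%nat /\ Q k)) as [[k [Hk HQ]]|Hno].
  - apply (IH k Hk HQ).
  - exists n; split; auto. intros k Hk. destruct (Nat.lt_ge_cases k n); auto. exfalso; apply Hno; eauto. Qed.

Lemma first_tile P r e : In e dirs -> in_hole P r ->
  exists j : nat, In (sh r (Z.of_nat (S j)) e) P /\ ~ In (sh r (Z.of_nat j) e) P /\
                  cconn P r (sh r (Z.of_nat j) e).
Proof. intros He Hh.
  assert (Hex : exists i, In (sh r (Z.of_nat i) e) P).
  { apply NNPP; intro Hn. apply (ray P r e r He); auto.
    - intros j Hj; apply Hn; eauto.
    - apply rt_refl. }
  destruct (least _ Hex) as [i [Hi Hmin]].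
  destruct i as [|j].
  - simpl in Hi; rewrite sh0 in Hi. destruct Hh; contradiction.
  - exists j; split; auto.
    assert (Hfree : forall i, (i <= j)%nat -> ~ In (sh r (Z.of_nat i) e) P).
    { intros i0 Hi0 Hin. specialize (Hmin _ Hin). lia. }
    split; [apply Hfree; auto|]. apply chain; auto. Qed.

Lemma inj_count {A} (l : list A) (T : list cell) (Rl : A -> cell -> Prop) :
  NoDup l -> (forall x, In x l -> exists y, In y T /\ Rl x y) ->
  (forall x x' y, In x l -> In x' l -> Rl x y -> Rl x' y -> x = x') ->
  (length l <= length T)%nat.
Proof. revert T. induction l as [|a l IH]; intros T Hn Hex Hinj; simpl; [lia|].
  inversion Hn; subst.
  destruct (Hex a (or_introl eq_refl)) as [ya [HyaT Hya]].
  assert (length l <= length (remove ceq_dec ya T))%nat.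
  { apply IH; auto.
    - intros x Hx. destruct (Hex x (or_intror Hx)) as [y [HyT Hy]]. exists y; split; auto.
      apply in_in_remove; auto. intro; subst. assert (x = a) by (apply (Hinj x a ya); simpl; auto).
      subst; contradiction.
    - intros; apply (Hinj x x' y); simpl; auto. }
  pose proof (remove_length_lt ceq_dec T ya HyaT). lia. Qed.

Lemma exists_min (f : cell -> Z) (Q : cell -> Prop) l :
  (exists x, In x l /\ Q x) -> exists x, In x l /\ Q x /\ forall y, In y l -> Q y -> (f x <= f y)%Z.
Proof. induction l as [|a l IH]; intros [x [Hx HQ]]; [contradiction|].
  destruct (classic (exists x, In x l /\ Q x)) as [Hl|Hl].
  - destruct (IH Hl) as [m [Hm [HQm Hmin]]].
    destruct (classic (Q a /\ (f a < f m)%Z)) as [[HQa Hlt]|Hno].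
    + exists a; repeat split; simpl; auto. intros y [<-|Hy] HQy; [lia|]. specialize (Hmin y Hy HQy); lia.
    + exists m; repeat split; simpl; auto. intros y [<-|Hy] HQy; auto.
      destruct (Z.le_gt_cases (f m) (f a)); auto. exfalso; apply Hno; auto.
  - destruct Hx as [<-|Hx]; [|exfalso; apply Hl; eauto].
    exists a; repeat split; simpl; auto. intros y [<-|Hy] HQy; [lia|]. exfalso; apply Hl; eauto.
Qed.

Definition holes_ok (P reps : list cell) : Prop :=
  NoDup reps /\ (forall r, In r reps -> in_hole P r) /\
  (forall r1 r2, In r1 reps -> In r2 reps -> cconn P r1 r2 -> r1 = r2).

Definition bdc (P : list cell) (d : cell) : nat :=
  length (filter (fun p => negb (memb (sh p (-1) d) P)) P).
Definition inc (P : list cell) (d : cell) : nat :=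
  length (filter (fun p => memb (sh p (-1) d) P) P).

Lemma inc_bdc P d : (inc P d + bdc P d = length P)%nat.
Proof. unfold inc, bdc. apply filter_length. Qed.

Lemma in_l_inl (reps : list cell) (Ks : list Z) r :
  In (inl r) (map (@inl cell Z) reps ++ map (@inr cell Z) Ks) -> In r reps.
Proof. intros H; apply in_app_or in H; destruct H as [H|H]; apply in_map_iff in H;
  destruct H as [x [Hx H]]; [inversion Hx; subst; auto | discriminate]. Qed.

Lemma bd_lower P reps d : In d dirs -> holes_ok P reps ->
  (length reps + length (nodup Z.eq_dec (map (key d) P)) <= bdc P d)%nat.
Proof. intros Hd [Hnd [Hin Hdist]].
  set (Ks := nodup Z.eq_dec (map (key d) P)).
  set (l := map (@inl cell Z) reps ++ map (@inr cell Z) Ks).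
  replace (length reps + length Ks)%nat with (length l) by (unfold l; rewrite length_app, !length_map; auto).
  unfold bdc.
  apply inj_count with (Rl := fun x p => match x with
     | inl r => In p P /\ ~ In (sh p (-1) d) P /\ cconn P r (sh p (-1) d)
     | inr z => In p P /\ ~ In (sh p (-1) d) P /\ key d p = z /\
                (forall r, in_hole P r -> cconn P r (sh p (-1) d) -> False) end).
  - unfold l. apply NoDup_app.
    + apply Injective_map_NoDup; auto. intros a b H; inversion H; auto.
    + apply Injective_map_NoDup; [intros a b H; inversion H; auto| apply NoDup_nodup].
    + intros x H1 H2. apply in_map_iff in H1, H2. destruct H1 as [? [<- _]]. destruct H2 as [? [? _]]; discriminate.
  - intros x Hx. destruct x as [r|z].
    + apply in_l_inl in Hx. destruct (first_tile P r d Hd (Hin r Hx)) as [j [H1 [H2 H3]]].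
      exists (sh r (Z.of_nat (S j)) d).
      assert (E : sh (sh r (Z.of_nat (S j)) d) (-1) d = sh r (Z.of_nat j) d)
        by (rewrite sh_sh; f_equal; lia).
      rewrite E, filter_In, Bool.negb_true_iff, memb_false. repeat split; auto. idtac.
      all: rewrite ?E; auto.
    + assert (Hz : In z Ks).
      { unfold l in Hx. apply in_app_or in Hx; destruct Hx as [Hx|Hx]; apply in_map_iff in Hx;
        destruct Hx as [x [Hx H]]; [discriminate| inversion Hx; subst; auto]. }
      unfold Ks in Hz. apply nodup_In, in_map_iff in Hz. destruct Hz as [q0 [Hq0 Hq0P]].
      destruct (exists_min (posd d) (fun q => key d q = z) P) as [q [HqP [Hqk Hqmin]]]; eauto.
      assert (Hray : forall j : nat, ~ In (sh (sh q (-1) d) (Z.of_nat j) (negd d)) P).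
      { intros j Hj. rewrite sh_neg, sh_sh in Hj.
        specialize (Hqmin _ Hj). rewrite key_sh, pos_sh in Hqmin; auto. specialize (Hqmin Hqk). lia. }
      exists q. rewrite filter_In, Bool.negb_true_iff, memb_false.
      assert (Hf : ~ In (sh q (-1) d) P) by (specialize (Hray 0%nat); simpl in Hray; rewrite sh0 in Hray; auto).
      repeat split; auto.
      intros r Hr Hc. apply (ray P (sh q (-1) d) (negd d) r (negd_dirs d Hd) Hray Hr Hc).
  - intros x x' y Hx Hx' H1 H2. destruct x as [r|z], x' as [r'|z'].
    + f_equal. apply Hdist; try (eapply in_l_inl; eauto).
      destruct H1 as [_ [_ H1]], H2 as [_ [_ H2]]. eapply cconn_trans; [exact H1| apply cconn_sym; auto].
    + exfalso. destruct H1 as [_ [_ H1]], H2 as [_ [_ [_ H2]]]. apply (H2 r); auto.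
      apply Hin; eapply in_l_inl; eauto.
    + exfalso. destruct H2 as [_ [_ H2]], H1 as [_ [_ [_ H1]]]. apply (H1 r'); auto.
      apply Hin; eapply in_l_inl; eauto.
    + destruct H1 as [_ [_ [H1 _]]], H2 as [_ [_ [H2 _]]]. congruence.
Qed.

Definition Ie (e : cell -> cell -> bool) (S : list cell) : nat :=
  sumn (fun p => sumn (fun q => indb (e p q)) S) S.

Lemma adj_split p q : indb (adjb p q) =
  (indb (ceqb q (sh p (-1) (1,0)%Z)) + indb (ceqb q (sh p (-1) (-1,0)%Z)) +
   indb (ceqb q (sh p (-1) (0,1)%Z)) + indb (ceqb q (sh p (-1) (0,-1)%Z)))%nat.
Proof. destruct p as [x y], q as [x' y']. unfold adjb, ceqb, sh, indb; simpl.
  repeat match goal with |- context [Z.eqb ?a ?b] => destruct (Z.eqb_spec a b) end; simpl; lia. Qed.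

Lemma inc_sum P : NoDup P ->
  (inc P (1,0)%Z + inc P (-1,0)%Z + inc P (0,1)%Z + inc P (0,-1)%Z)%nat = Ie adjb P.
Proof. intros Hn. unfold inc, Ie. rewrite !filter_sum. rewrite <- !sumn_plus.
  apply sumn_ext; intros p Hp.
  rewrite (sumn_ext _ _ P (fun q _ => adj_split p q)). rewrite !sumn_plus, !sumn_single; auto. Qed.

Definition Rel_e (P : list cell) (e : cell -> cell -> bool) (x y : cell) : Prop :=
  In x P /\ In y P /\ e x y = true.

Lemma Ie_cons e z S : Ie e (z :: S) =
  (indb (e z z) + sumn (fun q => indb (e z q)) S + sumn (fun p => indb (e p z)) S + Ie e S)%nat.
Proof. unfold Ie; simpl. rewrite sumn_plus. lia. Qed.

Lemma Ie_perm e S S' : Permutation S S' -> Ie e S = Ie e S'.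
Proof. intros H. unfold Ie. rewrite (sumn_perm _ _ _ H). apply sumn_ext; intros; apply sumn_perm; auto. Qed.

Lemma crossing P e S s y : clos_refl_trans cell (Rel_e P e) s y -> In s S -> ~ In y S ->
  exists x z, In x S /\ ~ In z S /\ Rel_e P e x z.
Proof. intros H. apply clos_rt_rt1n in H. induction H; intros Hs Hy; [contradiction|].
  destruct (In_dec ceq_dec y S) as [Hy'|Hy']; [apply IHclos_refl_trans_1n; auto| exists x, y; auto]. Qed.

Lemma graph_lower P e : NoDup P -> P <> [] -> (forall x y, e x y = e y x) ->
  (forall u v, In u P -> In v P -> clos_refl_trans cell (Rel_e P e) u v) ->
  (2 * (length P - 1) <= Ie e P)%nat.
Proof. intros Hn Hne Hsym Hc.
  assert (Hk : forall k, (1 <= k <= length P)%nat -> exists S, NoDup S /\ incl S P /\ length S = k /\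
     (2 * (k - 1) <= Ie e S)%nat).
  { induction k as [|k IH]; intros Hk; [lia|].
    destruct (Nat.eq_dec k 0) as [->|Hk0].
    - destruct P as [|p0 P0]; [congruence|]. exists [p0]. repeat split.
      + constructor; [intros []| constructor].
      + intros x [<-|[]]; left; auto.
      + simpl; lia.
    - destruct (IH ltac:(lia)) as [S [HnS [Hinc [HlS HI]]]].
      destruct (classic (exists y, In y P /\ ~ In y S)) as [[y [HyP HyS]]|Hno].
      2:{ exfalso. assert (incl P S). { intros y Hy. apply NNPP; intro; apply Hno; eauto. }
          pose proof (NoDup_incl_length Hn H). lia. }
      destruct S as [|s S0]; [simpl in HlS; lia|].
      destruct (crossing P e (s :: S0) s y) as [x [z [Hx [Hz [HxP [HzP Hxz]]]]]]; auto.
      { apply Hc; auto. apply Hinc; left; auto. }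
      left; auto.
      exists (z :: s :: S0). repeat split.
      + constructor; auto.
      + intros w [<-|Hw]; auto.
      + simpl in *; lia.
      + rewrite Ie_cons.
        pose proof (sumn_ge (fun q => indb (e z q)) (s :: S0) x Hx).
        pose proof (sumn_ge (fun p => indb (e p z)) (s :: S0) x Hx).
        cbv beta in H, H0. rewrite Hxz in H0. rewrite Hsym, Hxz in H. change (indb true) with 1%nat in H, H0. simpl in HlS. lia. }
  destruct P as [|p0 P0]; [congruence|].
  destruct (Hk (length (p0 :: P0)) ltac:(simpl; lia)) as [S [HnS [Hinc [HlS HI]]]].
  rewrite <- (Ie_perm e S); [lia|]. apply NoDup_Permutation_bis; auto; lia. Qed.

Definition pairb (a b p q : cell) : bool := ((ceqb p a && ceqb q b) || (ceqb p b && ceqb q a))%bool.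
Definition Eb (a b : cell) (p q : cell) : bool := (adjb p q && negb (pairb a b p q))%bool.

Lemma pairb_sym a b p q : pairb a b p q = pairb a b q p.
Proof. unfold pairb. destruct (ceqb p a), (ceqb q b), (ceqb p b), (ceqb q a); reflexivity. Qed.

Lemma Eb_sym a b p q : Eb a b p q = Eb a b q p.
Proof. unfold Eb. rewrite adjb_sym, pairb_sym. reflexivity. Qed.

Lemma pairb_true a b p q : pairb a b p q = true <-> (p = a /\ q = b) \/ (p = b /\ q = a).
Proof. unfold pairb. rewrite Bool.orb_true_iff, !Bool.andb_true_iff, !ceqb_true. tauto. Qed.

Lemma Eb_true a b p q : adj p q -> ~ (p = a /\ q = b) -> ~ (p = b /\ q = a) -> Eb a b p q = true.
Proof. intros H1 H2 H3. unfold Eb. apply adjb_true in H1. rewrite H1.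
  destruct (pairb a b p q) eqn:E; auto. apply pairb_true in E. tauto. Qed.

Lemma Iadj_ge P a b : NoDup P -> In a P -> In b P -> a <> b -> adj a b ->
  (Ie (Eb a b) P + 2 <= Ie adjb P)%nat.
Proof. intros Hn Ha Hb Hab Hadj.
  assert (Hpt : forall p q, (indb (Eb a b p q) + indb (pairb a b p q) <= indb (adjb p q))%nat).
  { intros p q. unfold Eb. destruct (pairb a b p q) eqn:E.
    - apply pairb_true in E. destruct E as [[-> ->]|[-> ->]].
      + apply adjb_true in Hadj; rewrite Hadj; simpl; lia.
      + apply adj_sym, adjb_true in Hadj; rewrite Hadj; simpl; lia.
    - rewrite Bool.andb_true_r; simpl; lia. }
  assert (H2 : (2 <= sumn (fun p => sumn (fun q => indb (pairb a b p q)) P) P)%nat).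
  { pose proof (sumn_ge2 (fun p => sumn (fun q => indb (pairb a b p q)) P) P a b Hn Ha Hb Hab) as H.
    pose proof (sumn_ge (fun q => indb (pairb a b a q)) P b Hb).
    pose proof (sumn_ge (fun q => indb (pairb a b b q)) P a Ha).
    cbv beta in *.
    assert (pairb a b a b = true) by (apply pairb_true; auto).
    assert (pairb a b b a = true) by (apply pairb_true; auto).
    rewrite H2 in H0; rewrite H3 in H1. change (indb true) with 1%nat in H0, H1. lia. }
  unfold Ie.
  eapply Nat.le_trans; [| apply sumn_le; intros p _; apply sumn_le; intros q _; apply Hpt].
  rewrite (sumn_ext (fun p => sumn (fun q => indb (Eb a b p q) + indb (pairb a b p q)) P)%nat (fun p => sumn (fun q => indb (Eb a b p q)) P + sumn (fun q => indb (pairb a b p q)) P)%nat P)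
    by (intros; apply sumn_plus).
  rewrite sumn_plus. lia. Qed.

Lemma vseg P e x ya yb : (ya <= yb)%Z -> (forall y, (ya <= y <= yb)%Z -> In (x,y) P) ->
  (forall y, (ya <= y < yb)%Z -> e (x,y) (x,y+1)%Z = true) ->
  clos_refl_trans cell (Rel_e P e) (x,ya) (x,yb).
Proof. intros Hle Hin He.
  assert (H : forall L : nat, (ya + Z.of_nat L <= yb)%Z -> clos_refl_trans cell (Rel_e P e) (x,ya) (x, ya + Z.of_nat L)%Z).
  { induction L; intros HL.
    - simpl; rewrite Z.add_0_r; apply rt_refl.
    - eapply rt_trans; [apply IHL; lia|]. apply rt_step.
      rewrite Nat2Z.inj_succ, <- Z.add_1_r, Z.add_assoc. repeat split; [apply Hin; lia| apply Hin; lia| apply He; lia]. }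
  specialize (H (Z.to_nat (yb - ya)) ltac:(lia)). replace (ya + Z.of_nat (Z.to_nat (yb - ya)))%Z with yb in H by lia. exact H. Qed.

Lemma hseg P e y xa xb : (xa <= xb)%Z -> (forall x, (xa <= x <= xb)%Z -> In (x,y) P) ->
  (forall x, (xa <= x < xb)%Z -> e (x,y) (x+1,y)%Z = true) ->
  clos_refl_trans cell (Rel_e P e) (xa,y) (xb,y).
Proof. intros Hle Hin He.
  assert (H : forall L : nat, (xa + Z.of_nat L <= xb)%Z -> clos_refl_trans cell (Rel_e P e) (xa,y) (xa + Z.of_nat L, y)%Z).
  { induction L; intros HL.
    - simpl; rewrite Z.add_0_r; apply rt_refl.
    - eapply rt_trans; [apply IHL; lia|]. apply rt_step.
      rewrite Nat2Z.inj_succ, <- Z.add_1_r, Z.add_assoc. repeat split; [apply Hin; lia| apply Hin; lia| apply He; lia]. }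
  specialize (H (Z.to_nat (xb - xa)) ltac:(lia)). replace (xa + Z.of_nat (Z.to_nat (xb - xa)))%Z with xb in H by lia. exact H. Qed.

Ltac ebtac := apply Eb_true; [unfold adj; simpl; lia
  | let H1 := fresh in let H2 := fresh in intros [H1 H2]; injection H1; injection H2; intros; lia
  | let H1 := fresh in let H2 := fresh in intros [H1 H2]; injection H1; injection H2; intros; lia].

Lemma ring_lower P x0 x1 y0 y1 : polyomino P -> (x0 < x1)%Z -> (y0 < y1)%Z ->
  (forall x y, (x0 <= x <= x1)%Z -> (y0 <= y <= y1)%Z -> (x = x0 \/ x = x1 \/ y = y0 \/ y = y1) -> In (x,y) P) ->
  (2 * length P <= Ie adjb P)%nat.
Proof. intros [Hne [Hn Hc]] Hx Hy Hb.
  set (a := (x0,y0)). set (b := ((x0+1)%Z,y0)).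
  set (e := Eb a b).
  assert (Rsym : forall u v, Rel_e P e u v -> Rel_e P e v u).
  { intros u v [? [? ?]]; repeat split; auto. unfold e; rewrite Eb_sym; auto. }
  assert (p1 : clos_refl_trans cell (Rel_e P e) (x0,y0) (x0,y1)).
  { apply vseg; [lia| intros; apply Hb; lia| intros; unfold e, a, b; ebtac]. }
  assert (p2 : clos_refl_trans cell (Rel_e P e) (x0,y1) (x1,y1)).
  { apply hseg; [lia| intros; apply Hb; lia| intros; unfold e, a, b; ebtac]. }
  assert (p3 : clos_refl_trans cell (Rel_e P e) (x1,y0) (x1,y1)).
  { apply vseg; [lia| intros; apply Hb; lia| intros; unfold e, a, b; ebtac]. }
  assert (p4 : clos_refl_trans cell (Rel_e P e) (x0+1,y0)%Z (x1,y0)).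
  { apply hseg; [lia| intros; apply Hb; lia| intros; unfold e, a, b; ebtac]. }
  assert (pab : clos_refl_trans cell (Rel_e P e) a b).
  { unfold a, b. eapply rt_trans; [exact p1|]. eapply rt_trans; [exact p2|].
    eapply rt_trans; apply rt_sym_gen; eauto. }
  assert (Hstep : forall u v, (In u P /\ In v P /\ adj u v) -> clos_refl_trans cell (Rel_e P e) u v).
  { intros u v [Hu' [Hv' Had]].
    destruct (e u v) eqn:E; [apply rt_step; repeat split; auto|].
    assert (pairb a b u v = true).
    { unfold e, Eb in E. apply adjb_true in Had. rewrite Had in E. simpl in E.
      destruct (pairb a b u v); auto. }
    apply pairb_true in H. destruct H as [[-> ->]|[-> ->]]; auto. apply rt_sym_gen; auto. }
  assert (Hconn : forall u v, In u P -> In v P -> clos_refl_trans cell (Rel_e P e) u v).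
  { intros u v Hu Hv. specialize (Hc u v Hu Hv). clear Hu Hv. induction Hc; [apply Hstep; auto| apply rt_refl| eapply rt_trans; eauto]. }
  assert (HaP : In a P) by (apply Hb; lia).
  assert (HbP : In b P) by (apply Hb; lia).
  pose proof (graph_lower P e Hn Hne (Eb_sym a b) Hconn).
  assert (Hab : a <> b) by (unfold a, b; intro Hq; injection Hq; intros; lia).
  assert (Hadj : adj a b) by (unfold adj, a, b; simpl; lia).
  pose proof (Iadj_ge P a b Hn HaP HbP Hab Hadj).
  fold e in H0.
  destruct P; [congruence|]. simpl in *. lia. Qed.

Definition Xs (P : list cell) : list Z := nodup Z.eq_dec (map fst P).
Definition Ys (P : list cell) : list Z := nodup Z.eq_dec (map snd P).

Lemma rep_in_XY P r : in_hole P r -> In (fst r) (Xs P) /\ In (snd r) (Ys P).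
Proof. intros Hh. split.
  - destruct (first_tile P r (0,1)%Z ltac:(simpl; auto) Hh) as [j [H1 _]].
    unfold Xs; apply nodup_In. replace (fst r) with (fst (sh r (Z.of_nat (S j)) (0,1)%Z)).
    + apply in_map; auto.
    + unfold sh; simpl; lia.
  - destruct (first_tile P r (1,0)%Z ltac:(simpl; auto) Hh) as [j [H1 _]].
    unfold Ys; apply nodup_In. replace (snd r) with (snd (sh r (Z.of_nat (S j)) (1,0)%Z)).
    + apply in_map; auto.
    + unfold sh; simpl; lia. Qed.

Lemma tile_in_XY P p : In p P -> In (fst p) (Xs P) /\ In (snd p) (Ys P).
Proof. intros H; split; [unfold Xs| unfold Ys]; apply nodup_In, in_map; auto. Qed.

Lemma NoDup_Preps P reps : NoDup P -> holes_ok P reps -> NoDup (P ++ reps).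
Proof. intros Hn [Hr [Hin _]]. apply NoDup_app; auto. intros a Ha Hb. destruct (Hin a Hb); contradiction. Qed.

Lemma incl_Preps P reps : holes_ok P reps -> incl (P ++ reps) (list_prod (Xs P) (Ys P)).
Proof. intros [_ [Hin _]] c Hc. destruct c as [x y]. apply in_prod_iff.
  apply in_app_or in Hc; destruct Hc as [Hc|Hc].
  - apply (tile_in_XY P (x,y) Hc).
  - apply (rep_in_XY P (x,y) (Hin _ Hc)). Qed.

Lemma GEN P reps : polyomino P -> holes_ok P reps ->
  (4 * length reps + 2 * length (Xs P) + 2 * length (Ys P) + Ie adjb P <= 4 * length P)%nat /\
  (2 * (length P - 1) <= Ie adjb P)%nat /\
  (length P + length reps <= length (Xs P) * length (Ys P))%nat.
Proof. intros Hpol Hh. pose proof Hpol as [Hne [Hn Hc]]. split; [|split].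
  - pose proof (bd_lower P reps (1,0)%Z ltac:(simpl; auto) Hh) as B1.
    pose proof (bd_lower P reps (-1,0)%Z ltac:(simpl; auto) Hh) as B2.
    pose proof (bd_lower P reps (0,1)%Z ltac:(simpl; auto) Hh) as B3.
    pose proof (bd_lower P reps (0,-1)%Z ltac:(simpl; auto) Hh) as B4.
    pose proof (inc_bdc P (1,0)%Z). pose proof (inc_bdc P (-1,0)%Z).
    pose proof (inc_bdc P (0,1)%Z). pose proof (inc_bdc P (0,-1)%Z).
    pose proof (inc_sum P Hn).
    assert (E1 : map (key (1,0)%Z) P = map snd P) by (apply map_ext; reflexivity).
    assert (E2 : map (key (-1,0)%Z) P = map snd P) by (apply map_ext; reflexivity).
    assert (E3 : map (key (0,1)%Z) P = map fst P) by (apply map_ext; reflexivity).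
    assert (E4 : map (key (0,-1)%Z) P = map fst P) by (apply map_ext; reflexivity).
    rewrite E1 in B1; rewrite E2 in B2; rewrite E3 in B3; rewrite E4 in B4.
    fold (Xs P) in B3, B4. fold (Ys P) in B1, B2. lia.
  - apply graph_lower; auto.
    + exact adjb_sym.
    + intros u v Hu Hv. specialize (Hc u v Hu Hv). clear Hu Hv.
      induction Hc as [u v [? [? Ha]]| |]; [apply rt_step; repeat split; auto; apply adjb_true; auto
        | apply rt_refl | eapply rt_trans; eauto].
  - pose proof (NoDup_incl_length (NoDup_Preps P reps Hn Hh) (incl_Preps P reps Hh)) as HL.
    rewrite length_app in HL. change (@length cell (list_prod (Xs P) (Ys P))) with (@length (Z*Z) (list_prod (Xs P) (Ys P))) in HL. rewrite length_prod in HL. lia. Qed.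

Lemma ivt P (g : cell -> Z) u v : (forall x y, adj x y -> (Z.abs (g x - g y) <= 1)%Z) ->
  clos_refl_trans cell (fun x y => In x P /\ In y P /\ adj x y) u v -> In u P ->
  forall z, (Z.min (g u) (g v) <= z <= Z.max (g u) (g v))%Z -> exists c, In c P /\ g c = z.
Proof. intros Hg H. apply clos_rt_rt1n in H. induction H; intros Hu w Hw.
  - exists x; split; auto; lia.
  - destruct H as [_ [Hy Hxy]]. destruct (Z.eq_dec w (g x)) as [->|Hne]; [exists x; auto|].
    apply IHclos_refl_trans_1n; auto. specialize (Hg _ _ Hxy). lia. Qed.

Lemma border_not_rep P x y e : In e dirs -> in_hole P (x,y) ->
  (forall j : nat, (0 < j)%nat -> ~ In (sh (x,y) (Z.of_nat j) e) P) -> False.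
Proof. intros He Hh Hj. apply (ray P (x,y) e (x,y) He); [|auto|apply rt_refl].
  intros j. destruct j as [|j]; [simpl; rewrite sh0; destruct Hh; auto| apply Hj; lia]. Qed.

Lemma ring_from_full P reps : polyomino P -> holes_ok P reps ->
  (length P + length reps = length (Xs P) * length (Ys P))%nat ->
  (2 <= length (Xs P))%nat -> (2 <= length (Ys P))%nat -> (2 * length P <= Ie adjb P)%nat.
Proof. intros Hpol Hh Hfull HX HY. pose proof Hpol as [Hne [Hn Hc]].
  assert (Hbox : incl (list_prod (Xs P) (Ys P)) (P ++ reps)).
  { apply NoDup_length_incl; [apply NoDup_Preps; auto| |apply incl_Preps; auto].
    change (@length cell (list_prod (Xs P) (Ys P))) with (@length (Z*Z) (list_prod (Xs P) (Ys P))).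
    rewrite length_prod, length_app; lia. }
  destruct P as [|p0 P0] eqn:EP; [congruence|]. rewrite <- EP in *.
  assert (Hex : exists x, In x P /\ True) by (exists p0; rewrite EP; simpl; auto).
  destruct (exists_min fst (fun _ => True) P Hex) as [pa [Hpa [_ Hmina]]].
  destruct (exists_min (fun c => - fst c)%Z (fun _ => True) P Hex) as [pb [Hpb [_ Hminb]]].
  destruct (exists_min snd (fun _ => True) P Hex) as [pc [Hpc [_ Hminc]]].
  destruct (exists_min (fun c => - snd c)%Z (fun _ => True) P Hex) as [pd [Hpd [_ Hmind]]].
  set (x0 := fst pa). set (x1 := fst pb). set (y0 := snd pc). set (y1 := snd pd).
  assert (HXr : forall x, In x (Xs P) -> (x0 <= x <= x1)%Z).
  { intros x Hx. unfold Xs in Hx. apply nodup_In, in_map_iff in Hx. destruct Hx as [p [<- Hp]].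
    specialize (Hmina p Hp I); specialize (Hminb p Hp I). unfold x0, x1; lia. }
  assert (HYr : forall y, In y (Ys P) -> (y0 <= y <= y1)%Z).
  { intros y Hy. unfold Ys in Hy. apply nodup_In, in_map_iff in Hy. destruct Hy as [p [<- Hp]].
    specialize (Hminc p Hp I); specialize (Hmind p Hp I). unfold y0, y1; lia. }
  assert (Hx01 : (x0 < x1)%Z).
  { pose proof (NoDup_nodup Z.eq_dec (map fst P)) as HnX. fold (Xs P) in HnX.
    destruct (Xs P) as [|e1 [|e2 r]] eqn:E; simpl in HX; try lia.
    inversion HnX; subst. assert (e1 <> e2) by (intro; subst; apply H1; left; auto).
    pose proof (HXr e1 ltac:(left; auto)). pose proof (HXr e2 ltac:(right; left; auto)). lia. }
  assert (Hy01 : (y0 < y1)%Z).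
  { pose proof (NoDup_nodup Z.eq_dec (map snd P)) as HnY. fold (Ys P) in HnY.
    destruct (Ys P) as [|e1 [|e2 r]] eqn:E; simpl in HY; try lia.
    inversion HnY; subst. assert (e1 <> e2) by (intro; subst; apply H1; left; auto).
    pose proof (HYr e1 ltac:(left; auto)). pose proof (HYr e2 ltac:(right; left; auto)). lia. }
  assert (HinX : forall x, (x0 <= x <= x1)%Z -> In x (Xs P)).
  { intros x Hx. destruct (ivt P fst pa pb ltac:(unfold adj; intros; lia) (Hc pa pb Hpa Hpb) Hpa x ltac:(unfold x0, x1 in *; lia))
      as [c [HcP Hcx]]. rewrite <- Hcx. apply tile_in_XY; auto. }
  assert (HinY : forall y, (y0 <= y <= y1)%Z -> In y (Ys P)).
  { intros y Hy. destruct (ivt P snd pc pd ltac:(unfold adj; intros; lia) (Hc pc pd Hpc Hpd) Hpc y ltac:(unfold y0, y1 in *; lia))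
      as [c [HcP Hcy]]. rewrite <- Hcy. apply tile_in_XY; auto. }
  apply (ring_lower P x0 x1 y0 y1 Hpol Hx01 Hy01).
  intros x y Hx Hy Hbd.
  assert (Hin : In (x,y) (P ++ reps)) by (apply Hbox, in_prod_iff; auto).
  apply in_app_or in Hin. destruct Hin as [Hin|Hin]; auto. exfalso.
  destruct Hh as [_ [Hhole _]]. specialize (Hhole _ Hin).
  destruct Hbd as [ -> | [ -> | [ -> | -> ] ] ].
  - apply (border_not_rep P x0 y (-1,0)%Z ltac:(simpl; auto) Hhole).
    intros j Hj Hin'. specialize (Hmina _ Hin' I). unfold sh in Hmina; simpl in Hmina. unfold x0 in *; lia.
  - apply (border_not_rep P x1 y (1,0)%Z ltac:(simpl; auto) Hhole).
    intros j Hj Hin'. specialize (Hminb _ Hin' I). unfold sh in Hminb; simpl in Hminb. unfold x1 in *; lia.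
  - apply (border_not_rep P x y0 (0,-1)%Z ltac:(simpl; auto) Hhole).
    intros j Hj Hin'. specialize (Hminc _ Hin' I). unfold sh in Hminc; simpl in Hminc. unfold y0 in *; lia.
  - apply (border_not_rep P x y1 (0,1)%Z ltac:(simpl; auto) Hhole).
    intros j Hj Hin'. specialize (Hmind _ Hin' I). unfold sh in Hmind; simpl in Hmind. unfold y1 in *; lia.
Qed.

Definition cZ (A : nat) : Z := ceilR (2 * sqrt (INR A)).

Lemma cZ_le A K : (4 * A <= K * K)%nat -> (cZ A <= Z.of_nat K)%Z.
Proof. intros H. unfold cZ, ceilR.
  destruct (archimed (- (2 * sqrt (INR A)))) as [H1 H2].
  assert (Hs : (2 * sqrt (INR A) <= INR K)%R).
  { assert (HA : (INR A <= (INR K / 2) * (INR K / 2))%R).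
    { apply le_INR in H. rewrite !mult_INR in H. replace (INR 4) with 4%R in H by (simpl; lra). nra. }
    assert (HK : (0 <= INR K / 2)%R) by (pose proof (pos_INR K); lra).
    pose proof (sqrt_le_1_alt _ _ HA) as Hq. rewrite sqrt_square in Hq; auto. lra. }
  rewrite (INR_IZR_INZ K) in Hs.
  assert (Hlt : (IZR (- Z.of_nat K) < IZR (up (- (2 * sqrt (INR A)))))%R) by (rewrite opp_IZR; lra).
  apply lt_IZR in Hlt. lia. Qed.

Lemma M_iff a b : (M a b >= INR b)%R <-> (cZ (a + b) <= Z.of_nat a + 1 - 2 * Z.of_nat b)%Z.
Proof. unfold M. change (ceilR (2 * sqrt (INR (a + b)))) with (cZ (a + b)).
  rewrite !INR_IZR_INZ. split; intros H.
  - apply le_IZR. rewrite minus_IZR, plus_IZR, mult_IZR. simpl (IZR 1). simpl (IZR 2). lra.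
  - apply IZR_le in H. rewrite minus_IZR, plus_IZR, mult_IZR in H. simpl (IZR 1) in H. simpl (IZR 2) in H. lra. Qed.

Lemma m_spec h : (1 <= m h)%nat /\ (M (m h) h >= INR h)%R /\
  forall n, (1 <= n)%nat -> (M n h >= INR h)%R -> (m h <= n)%nat.
Proof. unfold m. apply epsilon_spec.
  assert (Hex : exists n, (1 <= n)%nat /\ (M n h >= INR h)%R).
  { exists (6 * h + 3)%nat. split; [lia|]. apply M_iff.
    pose proof (cZ_le (6 * h + 3 + h) (4 * h + 4) ltac:(nia)). lia. }
  destruct (least _ Hex) as [n [[Hn1 Hn2] Hmin]].
  exists n; split; [auto| split; [auto| intros k Hk1 Hk2; apply Hmin; auto]]. Qed.

Lemma max_nat (Q : nat -> Prop) B : (exists h, Q h) -> (forall h, Q h -> (h <= B)%nat) ->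
  exists s, Q s /\ forall h, Q h -> (h <= s)%nat.
Proof. intros [h0 Hh0] HB.
  destruct (least (fun k => forall h, Q h -> (h <= k)%nat)) as [u [Hu Hmin]]; [exists B; auto|].
  exists u; split; auto. apply NNPP; intro HQ.
  destruct u as [|u].
  - specialize (Hu h0 Hh0). assert (h0 = 0)%nat by lia. subst; contradiction.
  - assert (forall h, Q h -> (h <= u)%nat).
    { intros h Hh. specialize (Hu h Hh). destruct (Nat.eq_dec h (S u)); [subst; contradiction| lia]. }
    specialize (Hmin u H). lia. Qed.

Lemma m1_le : (m 1 <= 8)%nat.
Proof. destruct (m_spec 1) as [_ [_ H]]. apply H; [lia|]. apply M_iff.
  pose proof (cZ_le (8 + 1) 7 ltac:(lia)). lia. Qed.

Lemma t_spec alpha : (9 <= alpha)%nat -> (1 <= t alpha)%nat /\ (m (t alpha) + t alpha <= alpha)%nat /\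
  forall h, (1 <= h)%nat -> (m h + h <= alpha)%nat -> (h <= t alpha)%nat.
Proof. intros Ha. unfold t. apply epsilon_spec.
  assert (Hex : exists h, (1 <= h)%nat /\ (m h + h <= alpha)%nat) by (exists 1%nat; pose proof m1_le; split; lia).
  destruct (max_nat (fun h => (1 <= h)%nat /\ (m h + h <= alpha)%nat) alpha Hex) as [s [[Hs1 Hs2] Hmax]].
  { intros h [_ Hh]; lia. }
  exists s; split; [auto| split; [auto| intros h H1 H2; apply Hmax; auto]]. Qed.

Lemma holes_ok_of P k : has_holes P k -> exists reps, length reps = k /\ holes_ok P reps.
Proof. intros [reps [Hl [Hn [Hi [Hd _]]]]]. exists reps; split; [auto| split; [auto| split; auto]]. Qed.

Lemma amgm X Y : (4 * (X * Y) <= (X + Y) * (X + Y))%nat.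
Proof. destruct (Nat.le_ge_cases X Y) as [H|H].
  - replace Y with (X + (Y - X))%nat by lia. nia.
  - replace X with (Y + (X - Y))%nat by lia. nia. Qed.

Lemma core N w alpha P : (1 <= N)%nat -> (w = N \/ w = (N + 1)%nat) -> alpha = (N * w)%nat ->
  (9 <= alpha)%nat -> (m (t alpha) + t alpha = alpha)%nat ->
  polyomino P -> has_holes P (t alpha) -> length P = m (t alpha) -> False.
Proof. intros HN Hw Ha H9 Heq Hpol Hholes Hlen.
  destruct (holes_ok_of P _ Hholes) as [reps [Hlr Hh]].
  destruct (GEN P reps Hpol Hh) as [G1 [G2 G3]].
  destruct (t_spec alpha H9) as [Hk1 _].
  destruct (m_spec (t alpha)) as [_ [_ Hmin]].
  set (k := t alpha) in *. set (n := length P) in *.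
  set (X := length (Xs P)) in *. set (Y := length (Ys P)) in *.
  rewrite Hlr in G1, G3.
  assert (HX1 : (1 <= X)%nat) by (destruct X; simpl in G3; lia).
  assert (HY1 : (1 <= Y)%nat) by (destruct Y; rewrite ?Nat.mul_0_r in G3; lia).
  assert (HM : ~ (M (n - 1) k >= INR k)%R).
  { intro HM. specialize (Hmin (n - 1)%nat ltac:(lia) HM). lia. }
  rewrite M_iff in HM. replace (n - 1 + k)%nat with (alpha - 1)%nat in HM by lia.
  assert (HK : exists K, (4 * (alpha - 1) <= K * K)%nat /\
                 forall X Y, (X + Y <= K)%nat -> (alpha <= X * Y)%nat -> (X * Y <= alpha)%nat).
  { destruct Hw as [-> | ->].
    - exists (2 * N)%nat. split; [nia|]. intros X' Y' H1 H2.
      pose proof (amgm X' Y').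
      assert ((X' + Y') * (X' + Y') <= (2 * N) * (2 * N))%nat by (apply Nat.mul_le_mono; auto).
      nia.
    - exists (2 * N + 1)%nat. split; [nia|]. intros X' Y' H1 H2.
      pose proof (amgm X' Y').
      assert ((X' + Y') * (X' + Y') <= (2 * N + 1) * (2 * N + 1))%nat by (apply Nat.mul_le_mono; auto).
      nia. }
  destruct HK as [K [HK1 HK2]].
  pose proof (cZ_le _ _ HK1) as Hc1.
  assert (HXY : (X + Y <= K)%nat) by lia.
  specialize (HK2 X Y HXY ltac:(lia)).
  assert (Hfull : (n + k = X * Y)%nat) by lia.
  assert (HX2 : (2 <= X)%nat) by (destruct (Nat.eq_dec X 1) as [E|E]; [rewrite E in Hfull; lia| lia]).
  assert (HY2 : (2 <= Y)%nat) by (destruct (Nat.eq_dec Y 1) as [E|E]; [rewrite E in Hfull; lia| lia]).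
  pose proof (ring_from_full P reps Hpol Hh ltac:(rewrite Hlr; exact Hfull) HX2 HY2) as Hr.
  pose proof (amgm X Y). assert (H4 : (4 * (alpha - 1) <= (X + Y) * (X + Y))%nat) by nia.
  pose proof (cZ_le _ _ H4). lia. Qed.

Lemma Xs_bound N w P : in_rect N w P -> (length (Xs P) <= N)%nat /\ (length (Ys P) <= w)%nat.
Proof. intros Hr. split.
  - replace N with (length (map Z.of_nat (seq 0 N))) by (rewrite length_map, length_seq; auto).
    apply NoDup_incl_length; [apply NoDup_nodup|]. intros x Hx. unfold Xs in Hx.
    apply nodup_In, in_map_iff in Hx. destruct Hx as [p [<- Hp]]. destruct (Hr p Hp) as [H1 _].
    apply in_map_iff. exists (Z.to_nat (fst p)). split; [lia| apply in_seq; lia].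
  - replace w with (length (map Z.of_nat (seq 0 w))) by (rewrite length_map, length_seq; auto).
    apply NoDup_incl_length; [apply NoDup_nodup|]. intros x Hx. unfold Ys in Hx.
    apply nodup_In, in_map_iff in Hx. destruct Hx as [p [<- Hp]]. destruct (Hr p Hp) as [_ H1].
    apply in_map_iff. exists (Z.to_nat (snd p)). split; [lia| apply in_seq; lia]. Qed.

Lemma gen_M P k : polyomino P -> has_holes P k -> (M (length P) k >= INR k)%R /\
   (length P + k <= length (Xs P) * length (Ys P))%nat.
Proof. intros Hpol Hh. destruct (holes_ok_of P k Hh) as [reps [Hl Hok]].
  destruct (GEN P reps Hpol Hok) as [G1 [G2 G3]]. rewrite Hl in G1, G3. split; auto.
  apply M_iff. pose proof (amgm (length (Xs P)) (length (Ys P))).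
  assert (H4 : (4 * (length P + k) <= (length (Xs P) + length (Ys P)) * (length (Xs P) + length (Ys P)))%nat) by nia.
  pose proof (cZ_le _ _ H4).
  assert (1 <= length P)%nat by (destruct Hpol as [Hne _]; destruct P; [congruence| simpl; lia]). lia. Qed.

Theorem lemma6 (N w alpha : nat) :
  (1 <= N)%nat -> (w = N \/ w = (N + 1)%nat) -> alpha = (N * w)%nat ->
  (9 <= alpha)%nat ->
  (m (t alpha) + t alpha = alpha)%nat ->
  (forall P, polyomino P -> has_holes P (t alpha) -> (m (t alpha) < tiles P)%nat) /\
  (forall P k, polyomino P -> in_rect N w P -> has_holes P k -> (k <= t alpha - 1)%nat).
Proof. intros HN Hw Ha H9 Heq.
  destruct (t_spec alpha H9) as [Ht1 [Ht2 Htmax]].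
  split.
  - intros P Hpol Hh. unfold tiles.
    destruct (Nat.lt_ge_cases (m (t alpha)) (length P)) as [H|H]; auto. exfalso.
    destruct (gen_M P _ Hpol Hh) as [HM _].
    destruct (m_spec (t alpha)) as [_ [_ Hmin]].
    assert (1 <= length P)%nat by (destruct Hpol as [Hne _]; destruct P; [congruence| simpl; lia]).
    specialize (Hmin _ H0 HM).
    apply (core N w alpha P HN Hw Ha H9 Heq Hpol Hh). lia.
  - intros P k Hpol Hr Hh.
    destruct (Nat.le_gt_cases k (t alpha - 1)) as [H|H]; auto. exfalso.
    destruct (gen_M P _ Hpol Hh) as [HM HXY].
    destruct (Xs_bound N w P Hr) as [HX HY].
    assert (HXY' : (length (Xs P) * length (Ys P) <= N * w)%nat) by (apply Nat.mul_le_mono; auto).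
    assert (1 <= length P)%nat by (destruct Hpol as [Hne _]; destruct P; [congruence| simpl; lia]).
    destruct (m_spec k) as [_ [_ Hmink]].
    specialize (Hmink _ H0 HM).
    assert (k <= t alpha)%nat by (apply Htmax; lia).
    assert (Hk : k = t alpha) by lia. subst k.
    destruct (m_spec (t alpha)) as [_ [_ Hmin]].
    apply (core N w alpha P HN Hw Ha H9 Heq Hpol Hh). lia. Qed.
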